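(* Let $G$ be a very well-covered graph and let $M$ be a perfect matching of $G$. Then no edge $xy\in M$ lies on a triangle of $G$, and no edge $xy\in M$ lies on an induced (chordless) cycle of $G$ of length $q\geq 5$. Equivalently: for every $q=3$ or $q\geq5$, no edge of an induced subgraph of $G$ isomorphic to the chordless cycle $C_q$ belongs to a perfect matching of $G$.
   Context: All graphs are finite, simple, undirected. A stable set is a set of pairwise non-adjacent vertices; $\alpha(G)$ is the maximum size of a stable set. $G$ is well-covered if all its maximal stable sets have the same cardinality, and $G$ is very well-covered if it is well-covered, has no isolated vertices, and $|V(G)|=2\alpha(G)$. $C_n$ denotes the chordless cycle on $n\ge 3$ vertices. *)

(* Defs.v *)
(* A simple graph is a symmetric irreflexive relation e on a finType T. *)
From mathcomp Require Import all_boot.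
Set Implicit Arguments. Unset Strict Implicit. Unset Printing Implicit Defensive.

Section Graphs.
Variables (T : finType) (e : rel T).

Definition stable (S : {set T}) : bool :=
  [forall x in S, forall y in S, ~~ e x y].

Definition alpha : nat := \max_(S : {set T} | stable S) #|S|.

Definition well_covered : Prop :=
  forall S1 S2 : {set T},
    maxset stable S1 -> maxset stable S2 -> #|S1| = #|S2|.

Definition no_isolated : Prop := forall x : T, exists y : T, e x y.

Definition very_well_covered : Prop :=
  [/\ well_covered, no_isolated & #|T| = 2 * alpha].

Definition perfect_matching (M : {set {set T}}) : Prop :=
  (forall A, A \in M -> exists x y, e x y /\ A = [set x; y])
  /\ partition M [set: T].

Definition cyc_adj (q : nat) (i j : 'I_q) : bool :=
  (val j == (val i).+1 %% q) || (val i == (val j).+1 %% q).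

Definition induced_cycle (q : nat) (c : 'I_q -> T) : Prop :=
  injective c /\ forall i j : 'I_q, e (c i) (c j) = cyc_adj i j.

End Graphs.

(* Main.v *)
Require Import Defs.
From mathcomp Require Import all_boot.

Section Aux.
Variables (T : finType) (e : rel T).
Hypotheses (e_sym : symmetric e) (e_irr : irreflexive e).

Lemma stableP (S : {set T}) :
  reflect (forall x y, x \in S -> y \in S -> ~~ e x y) (stable e S).
Proof.
apply: (iffP forallP) => [H x y xS yS | H x].
  by move: (H x); rewrite xS /= => /forallP/(_ y); rewrite yS.
by apply/implyP=> xS; apply/forallP=> y; apply/implyP=> yS; apply: H.
Qed.

Lemma alpha_max : exists B, stable e B /\ #|B| = alpha e.
Proof.
have st0 : stable e set0 by apply/stableP=> x y; rewrite inE.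
have : 0 < #|(fun S => stable e S) : pred {set T}|.
  by apply/card_gt0P; exists set0.
case/(eq_bigmax_cond (fun S : {set T} => #|S|)) => B HB Heq.
by exists B; split=> //; rewrite /alpha Heq.
Qed.

Lemma stable_le S : stable e S -> #|S| <= alpha e.
Proof. by move=> H; rewrite /alpha; apply: (leq_bigmax_cond (F := fun S : {set T} => #|S|)). Qed.

Lemma max_card S : well_covered e -> maxset (stable e) S -> #|S| = alpha e.
Proof.
move=> Hwc HS; have [B [sB cB]] := alpha_max.
have mB : maxset (stable e) B.
  apply/maxsetP; split=> // C sC BC; apply/eqP; rewrite eq_sym eqEcard BC /=.
  by rewrite cB stable_le.
by rewrite (Hwc S B HS mB) cB.
Qed.

Lemma meets (M : {set {set T}}) : very_well_covered e -> perfect_matching e M ->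
  forall S A, maxset (stable e) S -> A \in M -> exists2 w, w \in S & w \in A.
Proof.
case=> Hwc Hni Hcard [Hpairs Hpart] S A HS AM.
case/and3P: Hpart => /eqP Hcov Htriv H0.
  have cM : #|T| = 2 * #|M|.
    have -> : #|T| = \sum_(B in M) #|B|.
      by rewrite -cardsT -Hcov (@card_partition _ M (cover M)) //; apply/and3P; split.
    rewrite (eq_bigr (fun _ => 2)).
      by rewrite sum_nat_const mulnC.
    move=> B BM.
    have [x [y [exy ->]]] := Hpairs B BM.
    by rewrite cards2; case: eqP => // exy'; move: exy; rewrite exy' e_irr.
have Hm : alpha e = #|M|.
  by apply/eqP; have := eqn_mul2l 2 (alpha e) #|M|; rewrite -Hcard cM eqxx /= => <-.
have stS := stableP _ (maxsetp HS).
case: (set_0Vmem (S :&: A)) => [HSA | [w]]; last first.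
  by rewrite inE => /andP[wS wA]; exists w.
exfalso.
have inj : {in S &, injective (pblock M)}.
  move=> x y xS yS Pxy.
  have xc : x \in cover M by rewrite Hcov inE.
  have BM := pblock_mem xc.
  have xB : x \in pblock M x by rewrite mem_pblock.
  have yB : y \in pblock M x by rewrite Pxy mem_pblock Hcov inE.
  have [a [b [eab Bab]]] := Hpairs _ BM.
  move: xB yB; rewrite Bab !inE.
  case/orP=> /eqP ? ; case/orP=> /eqP ?; subst=> //.
    by have := stS _ _ xS yS; rewrite eab.
  by have := stS _ _ yS xS; rewrite eab.
have sub : pblock M @: S \subset M :\ A.
  apply/subsetP => B /imsetP[x xS ->].
  rewrite !inE pblock_mem ?Hcov ?inE // andbT.
  apply/eqP => PA.
  have : x \in S :&: A by rewrite inE xS -PA mem_pblock Hcov inE.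
  by rewrite HSA inE.
have := subset_leq_card sub; rewrite card_in_imset //.
by rewrite (max_card S Hwc HS) Hm (cardsD1 A M) AM add1n ltnn.
Qed.

Lemma no_adj (M : {set {set T}}) : very_well_covered e -> perfect_matching e M ->
  forall x y u v, [set x; y] \in M -> e x u -> e y v -> ~~ e u v -> False.
Proof.
move=> Hv HM x y u v xyM exu eyv nuv.
have st : stable e [set u; v].
  apply/stableP => a b; rewrite !inE.
  case/orP=> /eqP ?; case/orP=> /eqP ?; subst; rewrite ?e_irr //.
  by rewrite e_sym.
have [S HS sub] := maxset_exists st.
have stS := stableP _ (maxsetp HS).
have [w wS] := meets M Hv HM S _ HS xyM.
rewrite !inE => /orP[] /eqP ?; subst.
  by have := stS _ _ wS (subsetP sub u (set21 u v)); rewrite exu.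
by have := stS _ _ wS (subsetP sub v (set22 u v)); rewrite eyv.
Qed.
End Aux.

Lemma cyc_main (T : finType) (e : rel T)
  (e_sym : symmetric e) (e_irr : irreflexive e)
  (Hvwc : very_well_covered e) (M : {set {set T}})
  (HM : perfect_matching e M) (q : nat) (Hq : q = 3 \/ 5 <= q)
  (c : 'I_q -> T) (Hc : induced_cycle e c) (i j : 'I_q) :
  val j = (val i).+1 %% q -> [set c i; c j] \notin M.
Proof.
move=> Hj; apply/negP => Hin.
have qpos : 0 < q by case: Hq => [->|/(leq_trans _)->].
pose o k : 'I_q := Ordinal (ltn_pmod k qpos).
case: Hc => cinj Hadj.
have ltiq := ltn_ord i.
set n := val i in Hj ltiq.
have G1 : (n + q.-1) %% q + 1 = n %[mod q].
  by rewrite modnDml -addnA addn1 prednK // modnDr.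
apply: (@no_adj T e e_sym e_irr M Hvwc HM _ _ (c (o (n + q.-1))) (c (o (n + 2))) Hin).
- rewrite Hadj /cyc_adj /=; apply/orP; right.
  by rewrite -addn1 G1 modn_small.
- rewrite Hadj /cyc_adj /= Hj; apply/orP; left.
  by rewrite -[(n.+1 %% q).+1]addn1 modnDml addn1 addn2.
- case: Hq => [Hq3|Hq5].
    have -> : o (n + q.-1) = o (n + 2) by apply: val_inj; rewrite /= Hq3.
    by rewrite e_irr.
  rewrite Hadj /cyc_adj /= negb_or; apply/andP; split.
    rewrite -[((n + q.-1) %% q).+1]addn1 G1 -{2}[n]addn0.
    rewrite eqn_modDl mod0n modn_small //.
    by apply: leq_trans Hq5.
  rewrite -[((n + 2) %% q).+1]addn1 modnDml.
  have -> : n + q.-1 = (n + 3) + (q - 4).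
    by rewrite -addnA; congr (n + _); rewrite -subn1 addnBA ?(leq_trans _ Hq5) // subnDA subn1.
  have -> : n + 2 + 1 = (n + 3) + 0 by rewrite addn0 -addnA.
  rewrite eqn_modDl mod0n modn_small; last by rewrite ltn_subrL (leq_trans _ Hq5).
  by rewrite subn_eq0 -ltnS ltnNge Hq5.
Qed.

Theorem lemma1 (T : finType) (e : rel T)
  (e_sym : symmetric e) (e_irr : irreflexive e)
  (Hvwc : very_well_covered e) (M : {set {set T}})
  (HM : perfect_matching e M) :
  forall (q : nat), q = 3 \/ 5 <= q ->
  forall c : 'I_q -> T, induced_cycle e c ->
  forall i j : 'I_q, cyc_adj i j -> [set c i; c j] \notin M.
Proof.
move=> q Hq c Hc i j /orP[] /eqP H.
  exact: (@cyc_main T e e_sym e_irr Hvwc M HM q Hq c Hc i j H).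
rewrite setUC; exact: (@cyc_main T e e_sym e_irr Hvwc M HM q Hq c Hc j i H).
Qed.
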